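(* In the Poisson mining model of the context, call a block a lagger if no other block is mined during $(t_j-\Delta,t_j]$ where $t_j$ is its mining time, and a tailgater otherwise. Relabel every tailgater mined by an honest node as adversarial, so that the honest blocks are exactly the laggers mined by honest nodes. Then (i) the blocks are independently honest with probability $p=\rho e^{-\lambda\Delta}$ and adversarial with probability $1-p$; and (ii) every honest block is received by all honest nodes before the next honest block is mined, so that all honest blocks lie at distinct heights and every honest block mined after any time $\tau$ is higher than every honest block mined by time $\tau$.
   Context: Blocks are mined according to a homogeneous Poisson process of rate $\lambda>0$; independently, each block is mined by an honest node with probability $\rho$ and by the adversary otherwise. Block $j$ is mined at time $t_j$. An honest block mined at time $t$ extends a longest chain in its miner's view just before $t$ and is published immediately; if an honest node mines or receives a new longest chain at time $t$, all honest nodes receive it by time $t+\Delta$, with $\Delta\ge0$. *)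

(* Defs.v *)
From HB Require Import structures.
From mathcomp Require Import all_boot all_order all_algebra.
From mathcomp Require Import all_classical all_reals all_analysis.
Set Implicit Arguments. Unset Strict Implicit. Unset Printing Implicit Defensive.
Import Order.TTheory GRing.Theory Num.Theory.
Local Open Scope classical_set_scope.
Local Open Scope ring_scope.

(* Mining time of block j (j = 0,1,2,...): sum of the first j+1 inter-arrival times. *)
Definition mining_time (T : Type) (R : realType) (X : nat -> T -> R) (j : nat) (w : T) : R :=
  \sum_(i < j.+1) X i w.

(* Block j is a lagger if no other block (including the genesis block, mined at
   time 0) is mined during (t_j - Delta, t_j]. *)
Definition lagger (T : Type) (R : realType) (X : nat -> T -> R) (Delta : R) (j : nat) (w : T) : Prop :=
  let t := mining_time X in
  ~ (t j w - Delta < 0 /\ 0 <= t j w) /\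
  ~ (exists i, i <> j /\ t j w - Delta < t i w /\ t i w <= t j w).

Definition honest_relabeled (T : Type) (R : realType) (X : nat -> T -> R) (Hm : nat -> set T)
  (Delta : R) (j : nat) : set T :=
  [set w | Hm j w /\ lagger X Delta j w].

Definition mutually_independent_events d (T : measurableType d) (R : realType)
  (P : probability T R) (I : eqType) (E : I -> set T) : Prop :=
  forall s : seq I, uniq s ->
    P (\big[setI/setT]_(i <- s) E i) = \big[*%E/1%E]_(i <- s) P (E i).

Definition mutually_independent d (T : measurableType d) (R : realType)
  (P : probability T R) (I : eqType) (Y : I -> T -> R) : Prop :=
  forall (s : seq I) (B : I -> set R), uniq s -> (forall i, measurable (B i)) ->
    P (\big[setI/setT]_(i <- s) (Y i @^-1` B i)) = \big[*%E/1%E]_(i <- s) P (Y i @^-1` B i).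

(* Node : type of honest nodes; has m i s : honest node m holds block i at time s. *)
Definition held_before (Node : Type) (R : realType) (has : Node -> nat -> R -> Prop)
  (m : Node) (t : R) (i : nat) : Prop :=
  exists s, s < t /\ has m i s.

(* h is the height of a longest chain in m's view just before t (genesis has height 0). *)
Definition longest_height (Node : Type) (R : realType) (hgt : nat -> nat)
  (has : Node -> nat -> R -> Prop) (m : Node) (t : R) (h : nat) : Prop :=
  (forall i, held_before has m t i -> (hgt i <= h)%N) /\
  (h = 0%N \/ exists i, held_before has m t i /\ hgt i = h).

(* t j : mining time of block j; hm j : block j mined by an honest node (miner j);
   hgt j : height of block j. *)
Definition execution (Node : Type) (R : realType) (t : nat -> R) (hm : nat -> Prop) (Delta : R)
  (miner : nat -> Node) (hgt : nat -> nat) (has : Node -> nat -> R -> Prop) : Prop :=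
  [/\
      (forall m i s s', has m i s -> s <= s' -> has m i s'),
      (* an honest block extends a longest chain in its miner's view just before t j *)
      (forall j, hm j -> exists h, longest_height hgt has (miner j) (t j) h /\ hgt j = h.+1),
      (forall j, hm j -> has (miner j) j (t j)),
      (* an honest node mining a new longest chain at time t: all honest nodes have it by t + Delta *)
      (forall j, hm j -> forall m', has m' j (t j + Delta)) &
      (* an honest node receiving a new longest chain at time s: all honest nodes have it by s + Delta *)
      (forall m i s, has m i s -> ~ held_before has m s i ->
         (forall i', held_before has m s i' -> (hgt i' < hgt i)%N) ->
         forall m', has m' i (s + Delta))].

Definition chain_claim (Node : Type) (R : realType) (t : nat -> R) (hon : nat -> Prop)
  (hgt : nat -> nat) (has : Node -> nat -> R -> Prop) : Prop :=
  [/\ (forall j k, hon j -> hon k -> (j < k)%N -> forall m, held_before has m (t k) j),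
      (forall j k, hon j -> hon k -> j <> k -> hgt j <> hgt k) &
      (forall (tau : R) j k, hon j -> hon k -> t j <= tau -> tau < t k -> (hgt j < hgt k)%N)].

(* Main.v *)
Require Import Defs.
From HB Require Import structures.
From mathcomp Require Import all_boot all_order all_algebra.
From mathcomp Require Import all_classical all_reals all_analysis.
From mathcomp Require Import zify ring lra.
Import Order.TTheory GRing.Theory Num.Theory.
Local Open Scope classical_set_scope.
Local Open Scope ring_scope.
Set Implicit Arguments. Unset Strict Implicit. Unset Printing Implicit Defensive.

Lemma mt_succ (T : Type) (R : realType) (X : nat -> T -> R) j w :
  mining_time X j.+1 w = mining_time X j w + X j.+1 w.
Proof. by rewrite /mining_time big_ord_recr. Qed.

Lemma mt0 (T : Type) (R : realType) (X : nat -> T -> R) w :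
  mining_time X 0 w = X 0%N w.
Proof. by rewrite /mining_time big_ord1. Qed.

Lemma mt_pos (T : Type) (R : realType) (X : nat -> T -> R) w :
  (forall k, 0 < X k w) -> forall j, 0 < mining_time X j w.
Proof.
move=> hp; elim=> [|j IH]; first by rewrite mt0.
by rewrite mt_succ addr_gt0.
Qed.

Lemma mt_geX (T : Type) (R : realType) (X : nat -> T -> R) w :
  (forall k, 0 < X k w) -> forall j, X j w <= mining_time X j w.
Proof.
move=> hp [|j]; first by rewrite mt0.
by rewrite mt_succ lerDr ltW // mt_pos.
Qed.

Lemma mt_lt (T : Type) (R : realType) (X : nat -> T -> R) w :
  (forall k, 0 < X k w) -> forall i j, (i < j)%N -> mining_time X i w < mining_time X j w.
Proof.
move=> hp i; elim=> [//|j IH]; rewrite ltnS leq_eqVlt => /orP[/eqP->|/IH h].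
  by rewrite mt_succ ltrDl.
by apply: (lt_trans h); rewrite mt_succ ltrDl.
Qed.

Lemma mt_le (T : Type) (R : realType) (X : nat -> T -> R) w :
  (forall k, 0 < X k w) -> forall i j, (i <= j)%N -> mining_time X i w <= mining_time X j w.
Proof.
move=> hp i j; rewrite leq_eqVlt => /orP[/eqP->//|h].
exact/ltW/mt_lt.
Qed.

Lemma lagger_iff (T : Type) (R : realType) (X : nat -> T -> R) (Delta : R) w j :
  (forall k, 0 < X k w) -> (forall k, X k w <> Delta) ->
  lagger X Delta j w <-> Delta < X j w.
Proof.
move=> hp hne; split.
- case=> h1 h2; rewrite ltNge; apply/negP => hle.
  have hlt : X j w < Delta by rewrite lt_neqAle hle andbT; apply/eqP/hne.
  case: j hlt {hle} h1 h2 => [|j] hlt h1 h2.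
    apply: h1; rewrite mt0; split; first by rewrite subr_lt0.
    exact/ltW.
  apply: h2; exists j; split; first by lia.
  rewrite mt_succ; split; last by rewrite lerDl ltW.
  move: hlt; lra.
- move=> hlt; split.
    case=> h _; move: h; rewrite subr_lt0 => h.
    have := mt_geX hp j; lra.
  case=> i [hij [h1 h2]].
  case: (ltngtP i j) => hc; last by [].
  + case: j hlt hij h1 h2 hc => [|j] // hlt hij h1 h2 hc.
    have := mt_le hp (_ : (i <= j)%N); rewrite ltnS in hc => /(_ hc).
    move: h1; rewrite mt_succ; lra.
  + have := mt_lt hp hc; lra.
Qed.

Lemma chain_ok (T : Type) (R : realType) (X : nat -> T -> R) (Hm : nat -> set T) (Delta : R) w
  (Node : Type) (miner : nat -> Node) (hgt : nat -> nat) (has : Node -> nat -> R -> Prop) :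
  (forall k, 0 < X k w) -> (forall k, X k w <> Delta) ->
  execution (fun j => mining_time X j w) (fun j => Hm j w) Delta miner hgt has ->
  chain_claim (fun j => mining_time X j w) (fun j => honest_relabeled X Hm Delta j w) hgt has.
Proof.
move=> hp hne [E1 E2 E3 E4 E5].
have H1 : forall j k, honest_relabeled X Hm Delta j w -> honest_relabeled X Hm Delta k w ->
    (j < k)%N -> forall m, held_before has m (mining_time X k w) j.
  move=> j k [hj _] [_ /(lagger_iff _ hp hne) lk] jk m.
  exists (mining_time X j w + Delta); split; last exact: E4.
  case: k lk jk => [//|k] lk; rewrite ltnS => jk.
  rewrite mt_succ; have := mt_le hp jk; lra.
have H2 : forall j k, honest_relabeled X Hm Delta j w -> honest_relabeled X Hm Delta k w ->
    (j < k)%N -> (hgt j < hgt k)%N.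
  move=> j k hj hk jk; have [hk1 _] := hk.
  have [h [[hl _] ->]] := E2 k hk1.
  by rewrite ltnS; apply: hl; apply: H1.
split.
- exact: H1.
- move=> j k hj hk /eqP; rewrite neq_ltn => /orP[] c.
    by have := H2 _ _ hj hk c; lia.
  by have := H2 _ _ hk hj c; lia.
- move=> tau j k hj hk h1 h2; apply: H2 => //.
  rewrite ltnNge; apply/negP => c.
  have := mt_le hp c; lra.
Qed.

Lemma mset_lt (R : realType) d (T : measurableType d) (f g : T -> R) :
  measurable_fun setT f -> measurable_fun setT g -> measurable [set w | f w < g w].
Proof.
move=> hf hg.
have := measurable_realfun.measurable_fun_ltr hf hg measurableT (Y := [set true]) ltac:(by []).
rewrite setTI; congr measurable; apply/seteqP; split => x /=; by [].
Qed.

Lemma mset_le (R : realType) d (T : measurableType d) (f g : T -> R) :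
  measurable_fun setT f -> measurable_fun setT g -> measurable [set w | f w <= g w].
Proof.
move=> hf hg.
have -> : [set w | f w <= g w] = ~` [set w | g w < f w].
  by apply/seteqP; split => x /=; rewrite leNgt => /negP.
exact/measurableC/mset_lt.
Qed.

Lemma null_le0 (R : realType) d (T : measurableType d) (P : probability T R) lambda (Y : T -> R) :
  measurable_fun setT Y ->
  (forall (x : R), 0 <= x -> P [set w | x < Y w] = (expR (- (lambda * x)))%:E) ->
  P [set w | Y w <= 0] = 0%E.
Proof.
move=> hY hP.
have -> : [set w | Y w <= 0] = ~` [set w | 0 < Y w].
  by apply/seteqP; split => x /=; rewrite leNgt => /negP.
rewrite probability_setC; last exact: mset_lt.
by rewrite hP // mulr0 oppr0 expR0 subee.
Qed.

Lemma prob_real (R : realType) d (T : measurableType d) (P : probability T R) (A : set T) :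
  measurable A -> exists c : R, P A = c%:E /\ 0 <= c <= 1.
Proof.
move=> mA; have hf : P A \is a fin_num by apply: fin_num_measure.
exists (fine (P A)); rewrite fineK //; split => //.
have h0 : (0 <= P A)%E by [].
have h1 := probability_le1 P mA.
move: hf h0 h1; case: (P A) => // r _; rewrite !lee_fin => -> -> //.
Qed.

Lemma null_eqD (R : realType) d (T : measurableType d) (P : probability T R) (lambda Delta : R) (Y : T -> R) :
  0 < lambda -> 0 < Delta ->
  measurable_fun setT Y ->
  (forall (x : R), 0 <= x -> P [set w | x < Y w] = (expR (- (lambda * x)))%:E) ->
  P [set w | Y w = Delta] = 0%E.
Proof.
move=> hl hD hY hP.
have mE : measurable [set w | Y w = Delta].
  have := hY measurableT [set Delta] (measurable_set1 Delta); rewrite setTI.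
  by congr measurable; apply/seteqP; split => x /=.
have mlt : forall x, measurable [set w | x < Y w].
  by move=> x; apply: mset_lt => //; exact: measurable_cst.
have [c [hc /andP[c0 c1]]] := prob_real P mE.
have key : forall e : R, 0 < e -> e <= Delta -> c <= lambda * e.
  move=> e e0 eD.
  have hs : [set w | Y w = Delta] `|` [set w | Delta < Y w] `<=` [set w | Delta - e < Y w].
    move=> x /= [->|h]; first by rewrite ltrBlDr ltrDl.
    by apply: lt_trans h; rewrite ltrBlDr ltrDl.
  have h : (P [set w | Y w = Delta] + P [set w | (Delta < Y w)%R] <= P [set w | (Delta - e < Y w)%R])%E.
    have := le_measure P (mem_set (measurableU _ _ mE (mlt Delta))) (mem_set (mlt (Delta - e))) hs.
    rewrite measureU //.
    by apply/seteqP; split => x //= [-> ]; rewrite ltxx.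
  move: h.
  rewrite hc !hP ?subr_ge0 ?(ltW hD) // -EFinD lee_fin.
  set b := expR (- (lambda * (Delta - e))).
  have -> : expR (- (lambda * Delta)) = b * expR (- (lambda * e)).
    by rewrite /b -expRD; congr expR; ring.
  have hb1 : b <= 1 by rewrite expR_le1 oppr_le0 mulr_ge0 ?subr_ge0 // ltW.
  have hb0 : 0 <= b by apply: ltW; apply: expR_gt0.
  have he := expR_ge1Dx (- (lambda * e)).
  have hle : 0 <= lambda * e by rewrite mulr_ge0 // ltW.
  nra.
pose k := lambda * Delta.
have k0 : 0 < k by rewrite mulr_gt0.
pose e := Delta * c / (2 * k + 1).
have hden : 0 < 2 * k + 1 by lra.
rewrite hc.
have [->|cn] := eqVneq c 0; first by [].
have cp : 0 < c by rewrite lt_neqAle eq_sym cn.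
have e0 : 0 < e by rewrite /e divr_gt0 // mulr_gt0.
have eD : e <= Delta.
  rewrite /e ler_pdivrMr //; nra.
have := key e e0 eD.
have -> : lambda * e = k * c / (2 * k + 1) by rewrite /e /k !mulrA.
move=> h; exfalso; move: h; rewrite ler_pdivlMr // => h; nra.
Qed.

Lemma mt_meas (R : realType) d (T : measurableType d) (X : nat -> T -> R) j :
  (forall j, measurable_fun setT (X j)) -> measurable_fun setT (mining_time X j).
Proof. by move=> hX; rewrite /mining_time; apply: measurable_sum => i; apply: hX. Qed.

Lemma honest_meas (R : realType) d (T : measurableType d) (X : nat -> T -> R)
  (Hm : nat -> set T) (Delta : R) j :
  (forall j, measurable_fun setT (X j)) -> (forall j, measurable (Hm j)) ->
  measurable (honest_relabeled X Hm Delta j).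
Proof.
move=> hX hH.
pose t := mining_time X.
have ht : forall i, measurable_fun setT (t i) by move=> i; apply: mt_meas.
have htD : measurable_fun setT (fun w => t j w - Delta).
  by apply: measurable_realfun.measurable_funB => //; exact: measurable_cst.
have -> : honest_relabeled X Hm Delta j = Hm j `&`
   (~` ([set w | t j w - Delta < 0] `&` [set w | 0 <= t j w]) `&`
    ~` (\bigcup_i ([set w | i <> j] `&` ([set w | t j w - Delta < t i w] `&` [set w | t i w <= t j w])))).
  apply/seteqP; split => w /=.
    move=> [hw [h1 h2]]; split => //; split => // [[i _ [hi [h3 h4]]]]; apply: h2.
    by exists i.
  move=> [hw [h1 h2]]; split => //; split => // [[i [hi [h3 h4]]]]; apply: h2.
  by exists i.
apply: measurableI => //; apply: measurableI; apply: measurableC.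
  apply: measurableI; first by apply: mset_lt => //; exact: measurable_cst.
  by apply: mset_le => //; exact: measurable_cst.
apply: bigcupT_measurable => i; apply: measurableI.
  by case: (eqVneq i j) => [->|/eqP hij];
    [rewrite (_ : [set _ | j <> j] = set0) //; apply/seteqP; split => // w /=
    |rewrite (_ : [set _ | i <> j] = setT) //; apply/seteqP; split => // w /=].
by apply: measurableI; [apply: mset_lt|apply: mset_le].
Qed.

Lemma null_set_exists (R : realType) d (T : measurableType d) (P : probability T R)
  (lambda Delta : R) (X : nat -> T -> R) :
  0 < lambda -> 0 <= Delta ->
  (forall j, measurable_fun setT (X j)) ->
  (forall j (x : R), 0 <= x -> P [set w | x < X j w] = (expR (- (lambda * x)))%:E) ->
  exists N : set T, [/\ measurable N, P N = 0%E &
     forall w, ~ N w -> forall k, 0 < X k w /\ X k w <> Delta].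
Proof.
move=> hl hD hX hP.
have hneg : forall k, P.-negligible ([set w | X k w <= 0] `|` [set w | X k w = Delta]).
  move=> k; apply: negligibleU.
    exists [set w | X k w <= 0]; split => //.
      by apply: mset_le => //; exact: measurable_cst.
    exact: (null_le0 (hX k) (hP k)).
  have mE : measurable [set w | X k w = Delta].
    have := hX k measurableT [set Delta] (measurable_set1 Delta); rewrite setTI.
    by congr measurable; apply/seteqP; split => x /=.
  exists [set w | X k w = Delta]; split => //.
  have [hDp|hD0] := boolP (0 < Delta); first exact: (null_eqD hl hDp (hX k) (hP k)).
  have hD00 : Delta = 0 by move: hD0; rewrite -leNgt => ?; lra.
  apply/eqP; rewrite eq_le measure_ge0 andbT.
  rewrite -(null_le0 (hX k) (hP k)).
  apply: le_measure; rewrite ?inE //.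
    by apply: mset_le => //; exact: measurable_cst.
  by move=> w /= ->; rewrite hD00.
have [N [mN PN sN]] := negligible_bigcup hneg.
exists N; split => // w nw k; split.
  by rewrite ltNge; apply/negP => h; apply: nw; apply: sN; exists k => //; left.
by move=> h; apply: nw; apply: sN; exists k => //; right.
Qed.

Lemma P_offnull (R : realType) d (T : measurableType d) (P : probability T R) (E N : set T) :
  measurable E -> measurable N -> P N = 0%E -> P E = P (E `&` ~` N).
Proof.
move=> mE mN PN.
have h : P E = (P (E `\` N) + P (E `&` N))%E := measureDI P mE mN.
rewrite h.
have -> : P (E `&` N) = 0%E.
  apply/eqP; rewrite eq_le measure_ge0 andbT -PN.
  apply: le_measure; rewrite ?inE //; try exact: measurableI; exact: subIsetr.
by rewrite adde0.
Qed.

Fixpoint lst (s : seq nat) : seq (nat + nat) :=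
  match s with [::] => [::] | j :: s' => inl j :: inr j :: lst s' end.

Lemma lst_mem (j : nat) s : ((inl j : nat + nat) \in lst s) = (j \in s) /\ ((inr j : nat + nat) \in lst s) = (j \in s).
Proof.
elim: s => [//|a s [IH1 IH2]] /=; rewrite !in_cons IH1 IH2 /=.
have E1 : (inl j == inl a :> nat + nat) = (j == a) by apply/eqP/eqP => [[]|->].
have E2 : (inr j == inr a :> nat + nat) = (j == a) by apply/eqP/eqP => [[]|->].
by rewrite E1 E2.
Qed.

Lemma lst_uniq s : uniq s -> uniq (lst s).
Proof.
elim: s => [//|a s IH] /= /andP[ha hs]; rewrite !in_cons /= IH // andbT.
by have [-> ->] := lst_mem a s; rewrite ha.
Qed.

Lemma indep_B (R : realType) d (T : measurableType d) (P : probability T R)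
  (lambda rho Delta : R) (X : nat -> T -> R) (Hm : nat -> set T) :
  0 <= Delta ->
  (forall j (x : R), 0 <= x -> P [set w | x < X j w] = (expR (- (lambda * x)))%:E) ->
  (forall j, P (Hm j) = rho%:E) ->
  mutually_independent P
    (fun k : nat + nat => match k with inl j => X j | inr j => \1_(Hm j) end) ->
  forall s, uniq s ->
  P (\big[setI/setT]_(j <- s) [set w | Hm j w /\ Delta < X j w]) =
  \big[*%E/1%E]_(j <- s) ((expR (- (lambda * Delta)))%:E * rho%:E)%E.
Proof.
move=> hD hP hH hI s us.
pose Bs (k : nat + nat) : set R := match k with inl _ => `]Delta, +oo[%classic | inr _ => [set (1:R)] end.
have mB : forall k, measurable (Bs k).
  by case => j /=; [exact: measurable_itv|exact: measurable_set1].
have h := hI (lst s) Bs (lst_uniq us) mB.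
have e1 : forall j, X j @^-1` Bs (inl j) = [set w | Delta < X j w].
  move=> j; apply/seteqP; split => w /=; by rewrite in_itv /= andbT.
have e2 : forall j, (\1_(Hm j) : T -> R) @^-1` Bs (inr j) = Hm j.
  move=> j; apply/seteqP; split => w /=; rewrite /indic.
    by case: (boolP (w \in Hm j)) => [/set_mem //|_] /eqP; rewrite eq_sym oner_eq0.
  by move=> hw; rewrite mem_set.
have bigI : forall s, \big[setI/setT]_(k <- lst s)
     ((match k with inl j => X j | inr j => \1_(Hm j) end) @^-1` Bs k) =
   \big[setI/setT]_(j <- s) [set w | Hm j w /\ Delta < X j w].
  elim => [|a s' IH]; first by rewrite !big_nil.
  rewrite /= !big_cons IH setIA; congr (_ `&` _).
  rewrite e1 e2; apply/seteqP; split => w /=; by case.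
have bigP : forall s, \big[*%E/1%E]_(k <- lst s)
     P ((match k with inl j => X j | inr j => \1_(Hm j) end) @^-1` Bs k) =
   \big[*%E/1%E]_(j <- s) ((expR (- (lambda * Delta)))%:E * rho%:E)%E.
  elim => [|a s' IH]; first by rewrite !big_nil.
  by rewrite /= !big_cons IH e1 e2 hP // hH muleA.
by rewrite -bigI h bigP.
Qed.

Theorem mainTheorem8 (R : realType) (d : measure_display) (T : measurableType d)
  (P : probability T R) (lambda rho Delta : R) (X : nat -> T -> R) (Hm : nat -> set T) :
  0 < lambda -> 0 <= rho <= 1 -> 0 <= Delta ->
  (forall j, measurable_fun setT (X j)) ->
  (forall j, measurable (Hm j)) ->
  (forall j (x : R), 0 <= x -> P [set w | x < X j w] = (expR (- (lambda * x)))%:E) ->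
  (forall j, P (Hm j) = rho%:E) ->
  mutually_independent P
    (fun k : nat + nat => match k with inl j => X j | inr j => \1_(Hm j) end) ->
  (mutually_independent_events P (honest_relabeled X Hm Delta) /\
   forall j, P (honest_relabeled X Hm Delta j) = (rho * expR (- (lambda * Delta)))%:E)
  /\
  exists N : set T, measurable N /\ P N = 0%E /\
    forall w, ~ N w ->
    forall (Node : Type) (miner : nat -> Node) (hgt : nat -> nat)
           (has : Node -> nat -> R -> Prop),
      execution (fun j => mining_time X j w) (fun j => Hm j w) Delta miner hgt has ->
      chain_claim (fun j => mining_time X j w) (fun j => honest_relabeled X Hm Delta j w)
        hgt has.
Proof.
move=> hl hr hD hX hH hP hPH hI.
have [N [mN PN hN]] := null_set_exists hl hD hX hP.
have offN : forall j, honest_relabeled X Hm Delta j `&` ~` N =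
    [set w | Hm j w /\ Delta < X j w] `&` ~` N.
  move=> j; apply/seteqP; split => w /= [[h1 h2] nw]; split => //; split => //.
    by apply/(lagger_iff _ (fun k => (hN w nw k).1) (fun k => (hN w nw k).2)).
  by apply/(lagger_iff _ (fun k => (hN w nw k).1) (fun k => (hN w nw k).2)).
have bigoff : forall s, (\big[setI/setT]_(j <- s) honest_relabeled X Hm Delta j) `&` ~` N =
    (\big[setI/setT]_(j <- s) [set w | Hm j w /\ Delta < X j w]) `&` ~` N.
  elim => [|a s IH]; first by rewrite !big_nil.
  by rewrite !big_cons setIIl IH offN -setIIl.
have key : forall s, uniq s -> P (\big[setI/setT]_(j <- s) honest_relabeled X Hm Delta j) =
    \big[*%E/1%E]_(j <- s) ((expR (- (lambda * Delta)))%:E * rho%:E)%E.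
  move=> s us.
  have mBs : measurable (\big[setI/setT]_(j <- s) [set w | Hm j w /\ Delta < X j w]).
    apply: bigsetI_measurable => j _.
    have -> : [set w | Hm j w /\ Delta < X j w] = Hm j `&` [set w | Delta < X j w] by [].
    by apply: measurableI => //; apply: mset_lt => //; exact: measurable_cst.
  rewrite (P_offnull _ mN PN); last first.
    by apply: bigsetI_measurable => j _; exact: honest_meas.
  rewrite bigoff -(P_offnull _ mN PN) //.
  exact: indep_B.
split; first split.
- move=> s us; rewrite key //; apply: eq_bigr => j _.
  by have := key [:: j] erefl; rewrite !big_seq1.
- move=> j; have := key [:: j] erefl; rewrite !big_seq1 => ->.
  by rewrite -EFinM mulrC.
exists N; split => //; split => // w nw Node miner hgt has hex.
exact: (chain_ok (fun k => (hN w nw k).1) (fun k => (hN w nw k).2) hex).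
Qed.
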